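(* Let $s,z\in\mathbb{N}$ with $\mu:=s+z\ge1$, let $\omega_1,\dots,\omega_s>0$, and let $p\in\mathbb{N}$. Then there exist a constant $c_\mu>0$ and continuous functions $c_i:\mathbb{R}_{>0}^{\mu-i}\to\mathbb{R}_{>0}$, $i\in\{1,\dots,\mu-1\}$, such that for all constants $a_1,\dots,a_\mu\in(0,1]$ and every trajectory $y(\cdot)$ of the closed-loop system $(\Sigma)$ with $u=\kappa(y)$ (both defined in the context, with these $a_i$), the control signal $U(t):=\kappa(y(t))$ satisfies, for all $k\in\{0,\dots,p\}$ and all $t\ge0$, $$|U^{(k)}(t)|\le a_\mu c_\mu+\sum_{i=1}^{\mu-1}a_i\,c_i(a_\mu,\dots,a_{i+1}).$$
   Context: Notation: $A_0=\begin{pmatrix}0&1\\-1&0\end{pmatrix}$, $b_0=\begin{pmatrix}0\\1\end{pmatrix}$; $\|\cdot\|$ is the Euclidean norm. Given $s,z\in\mathbb{N}$, $\mu=s+z\ge1$, $\omega_1,\dots,\omega_s>0$ and positive constants $a_1,\dots,a_\mu$, define for $1\le i\le\mu$: $\theta_{i,i+1}:=1$ and, for $i+2\le k\le\mu+1$, $\theta_{i,k}:=\prod_{h=i}^{k-2}\frac{1}{a_{h+1}}$; define $Q_{i,\mu}:=\prod_{l=i}^{\mu}a_l$. The system $(\Sigma)$ has state $y=(y_1,\dots,y_\mu)$ with $y_i\in\mathbb{R}^2$ for $i\le s$ and $y_i\in\mathbb{R}$ for $i>s$, input $u\in\mathbb{R}$, and reads $$\dot y_i=\omega_iA_0y_i+b_0\sum_{k=i+1}^{s}\theta_{i,k}b_0^Ty_k+b_0\sum_{k=s+1}^{\mu}\theta_{i,k}y_k+\theta_{i,\mu+1}b_0u,\quad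 i=1,\dots,s,$$ $$\dot y_i=\sum_{k=i+1}^{\mu}\theta_{i,k}y_k+\theta_{i,\mu+1}u,\quad i=s+1,\dots,\mu$$ (empty sums are zero). The feedback $\kappa$ is $$\kappa(y)=-\sum_{i=1}^{s}\frac{Q_{i,\mu}\,b_0^Ty_i}{\big(1+\sum_{m=i}^{\mu}\|y_m\|^2\big)^{1/2}}-\sum_{i=s+1}^{\mu}\frac{Q_{i,\mu}\,y_i}{\big(1+\sum_{m=i}^{\mu}\|y_m\|^2\big)^{1/2}}.$$ *)

(* Defs.v *)
From Stdlib Require Import Reals Lra Lia.
Open Scope R_scope.

Fixpoint sum_range (f : nat -> R) (lo n : nat) : R :=
  match n with
  | O => 0
  | S m => f lo + sum_range f (S lo) m
  end.

Fixpoint prod_range (f : nat -> R) (lo n : nat) : R :=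
  match n with
  | O => 1
  | S m => f lo * prod_range f (S lo) m
  end.

(* theta_{i,k} = prod_{h=i}^{k-2} 1/a_{h+1} = prod_{j=i+1}^{k-1} 1/a_j ;
   theta_{i,i+1} = 1 (empty product). *)
Definition theta (a : nat -> R) (i k : nat) : R :=
  prod_range (fun j => / a j) (S i) (k - i - 1).

Definition Qim (a : nat -> R) (i mu : nat) : R :=
  prod_range a i (mu - i + 1).

(* A state y = (y_1,...,y_mu) is encoded by two maps
   Y1 Y2 : nat -> R:
   - for 1 <= i <= s : y_i = (Y1 i, Y2 i) in R^2, so b0^T y_i = Y2 i;
   - for s < i <= mu : y_i = Y2 i in R (Y1 i is unused).             *)
Definition sqnorm (s : nat) (Y1 Y2 : nat -> R) (m : nat) : R :=
  if (m <=? s)%nat then Y1 m ^ 2 + Y2 m ^ 2 else Y2 m ^ 2.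

Definition kappa (s z : nat) (a : nat -> R) (Y1 Y2 : nat -> R) : R :=
  let mu := (s + z)%nat in
  let den i := sqrt (1 + sum_range (sqnorm s Y1 Y2) i (mu - i + 1)) in
  - sum_range (fun i => Qim a i mu * Y2 i / den i) 1 s
  - sum_range (fun i => Qim a i mu * Y2 i / den i) (S s) z.

Definition is_trajectory (s z : nat) (omega a : nat -> R)
    (Y1 Y2 : nat -> R -> R) : Prop :=
  let mu := (s + z)%nat in
  let u t := kappa s z a (fun i => Y1 i t) (fun i => Y2 i t) in
  (forall i t, (1 <= i <= s)%nat ->
     (* first component of omega_i A0 y_i = omega_i * (second component) *)
     derivable_pt_lim (Y1 i) t (omega i * Y2 i t) /\
     derivable_pt_lim (Y2 i) t
       (- omega i * Y1 i t
        + sum_range (fun k => theta a i k * Y2 k t) (S i) (s - i)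
        + sum_range (fun k => theta a i k * Y2 k t) (S s) z
        + theta a i (S mu) * u t)) /\
  (forall i t, (s + 1 <= i <= mu)%nat ->
     derivable_pt_lim (Y2 i) t
       (sum_range (fun k => theta a i k * Y2 k t) (S i) (mu - i)
        + theta a i (S mu) * u t)).

(* We model c_i as a map (nat -> R) -> R that only
   depends on the coordinates a_{i+1},...,a_mu, is positive and continuous
   (w.r.t. those coordinates) on the positive orthant. *)
Definition pos_on (mu i : nat) (a : nat -> R) : Prop :=
  forall j, (i < j <= mu)%nat -> 0 < a j.

Definition admissible_coef (mu i : nat) (c : (nat -> R) -> R) : Prop :=
  (forall a b, (forall j, (i < j <= mu)%nat -> a j = b j) -> c a = c b) /\
  (forall a, pos_on mu i a -> 0 < c a) /\
  (forall a, pos_on mu i a ->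
     forall eps, 0 < eps -> exists delta, 0 < delta /\
       forall b, pos_on mu i b ->
         (forall j, (i < j <= mu)%nat -> Rabs (b j - a j) < delta) ->
         Rabs (c b - c a) < eps).

(* Main.v *)
Require Import Defs.
From Stdlib Require Import Reals Lra Lia List.
Import ListNotations.
Open Scope R_scope.

Lemma sum_range_split f lo n1 n2 :
  sum_range f lo (n1 + n2) = sum_range f lo n1 + sum_range f (lo + n1) n2.
Proof.
  revert lo; induction n1 as [|n1 IH]; intros lo; simpl.
  - rewrite Nat.add_0_r; ring.
  - rewrite IH. replace (lo + S n1)%nat with (S lo + n1)%nat by lia. ring.
Qed.

Lemma sum_range_ext f g lo n :
  (forall k, (lo <= k < lo + n)%nat -> f k = g k) ->
  sum_range f lo n = sum_range g lo n.
Proof.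
  revert lo; induction n as [|n IH]; intros lo H; simpl; auto.
  rewrite H by lia. rewrite IH; auto. intros; apply H; lia.
Qed.

Lemma sum_range_scal c f lo n :
  sum_range (fun k => c * f k) lo n = c * sum_range f lo n.
Proof. revert lo; induction n; intros lo; simpl; [ring|rewrite IHn; ring]. Qed.

Lemma sum_range_plus f g lo n :
  sum_range (fun k => f k + g k) lo n = sum_range f lo n + sum_range g lo n.
Proof. revert lo; induction n; intros lo; simpl; [ring|rewrite IHn; ring]. Qed.

Definition prodl (l : list R) : R := fold_right Rmult 1 l.

Lemma prodl_app l1 l2 : prodl (l1 ++ l2) = prodl l1 * prodl l2.
Proof. induction l1; simpl; [ring| rewrite IHl1; ring]. Qed.

Lemma prod_range_seq f lo n : prod_range f lo n = prodl (map f (seq lo n)).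
Proof. revert lo; induction n; intros lo; simpl; auto. rewrite IHn; auto. Qed.

Lemma sum_range_nonneg f lo n :
  (forall k, (lo <= k < lo + n)%nat -> 0 <= f k) -> 0 <= sum_range f lo n.
Proof.
  revert lo; induction n; intros lo H; simpl. lra.
  assert (0 <= f lo) by (apply H; lia).
  assert (0 <= sum_range f (S lo) n) by (apply IHn; intros; apply H; lia). lra.
Qed.

Lemma sum_range_term f lo n k :
  (forall k, (lo <= k < lo + n)%nat -> 0 <= f k) -> (lo <= k < lo + n)%nat ->
  f k <= sum_range f lo n.
Proof.
  revert lo; induction n; intros lo H Hk; simpl. lia.
  destruct (Nat.eq_dec k lo) as [->|Hne].
  - assert (0 <= sum_range f (S lo) n) by (apply sum_range_nonneg; intros; apply H; lia). lra.
  - assert (0 <= f lo) by (apply H; lia).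
    assert (f k <= sum_range f (S lo) n) by (apply IHn; [intros; apply H; lia| lia]). lra.
Qed.

Lemma sum_range_le f g lo n :
  (forall k, (lo <= k < lo + n)%nat -> f k <= g k) -> sum_range f lo n <= sum_range g lo n.
Proof.
  revert lo; induction n; intros lo H; simpl. lra.
  assert (f lo <= g lo) by (apply H; lia).
  assert (sum_range f (S lo) n <= sum_range g (S lo) n) by (apply IHn; intros; apply H; lia). lra.
Qed.

Lemma D_mult f g x lf lg : derivable_pt_lim f x lf -> derivable_pt_lim g x lg ->
  derivable_pt_lim (fun t => f t * g t) x (lf * g x + f x * lg).
Proof. intros; apply (derivable_pt_lim_mult f g); auto. Qed.
Lemma D_plus f g x lf lg : derivable_pt_lim f x lf -> derivable_pt_lim g x lg ->
  derivable_pt_lim (fun t => f t + g t) x (lf + lg).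
Proof. intros; apply (derivable_pt_lim_plus f g); auto. Qed.
Lemma D_const c x : derivable_pt_lim (fun _ => c) x 0.
Proof. apply (derivable_pt_lim_const c). Qed.
Lemma D_ext f g x l l' : (forall t, f t = g t) -> l = l' -> derivable_pt_lim f x l -> derivable_pt_lim g x l'.
Proof. intros H -> D. eapply derivable_pt_lim_ext; eauto. Qed.
Lemma D_ext' f g x l l' : derivable_pt_lim f x l -> (forall t, f t = g t) -> l = l' -> derivable_pt_lim g x l'.
Proof. intros D H ->. eapply derivable_pt_lim_ext; eauto. Qed.
Lemma D_inv f x l : derivable_pt_lim f x l -> f x <> 0 ->
  derivable_pt_lim (fun t => / f t) x (- l / (f x * f x)).
Proof.
  intros D H.
  pose proof (derivable_pt_lim_div (fun _ => 1) f x 0 l (D_const 1 x) D H) as K.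
  eapply D_ext; [| |exact K]. intros; unfold div_fct; simpl; unfold Rdiv; ring.
  unfold Rsqr; field; auto.
Qed.
Lemma D_sqrt f x l : derivable_pt_lim f x l -> 0 < f x ->
  derivable_pt_lim (fun t => sqrt (f t)) x (l / (2 * sqrt (f x))).
Proof.
  intros D H.
  pose proof (derivable_pt_lim_comp f sqrt x l _ D (derivable_pt_lim_sqrt _ H)) as K.
  eapply D_ext; [| |exact K]. intros; reflexivity. unfold Rdiv; ring.
Qed.
Lemma D_sum (f : nat -> R -> R) (f' : nat -> R) x lo n :
  (forall k, (lo <= k < lo + n)%nat -> derivable_pt_lim (f k) x (f' k)) ->
  derivable_pt_lim (fun t => sum_range (fun k => f k t) lo n) x (sum_range f' lo n).
Proof.
  revert lo; induction n; intros lo H; simpl.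
  - apply D_const.
  - apply D_plus. apply H; lia. apply IHn; intros; apply H; lia.
Qed.

Inductive var := VR (i : nat) | V1 (i m : nat) | V2 (i m : nat).
Record mono := Mono { cf : R; al : list nat; ail : list nat; vs : list var }.
Definition poly := list mono.

Definition rho (s z : nat) (Y1 Y2 : nat -> R) (i : nat) : R :=
  / sqrt (1 + sum_range (sqnorm s Y1 Y2) i (s + z - i + 1)).

Definition eval_var s z Y1 Y2 (v : var) : R :=
  match v with
  | VR i => rho s z Y1 Y2 i
  | V1 i m => rho s z Y1 Y2 i * Y1 m
  | V2 i m => rho s z Y1 Y2 i * Y2 m
  end.

Definition eval_mono s z (a : nat -> R) Y1 Y2 (m : mono) : R :=
  cf m * prodl (map a (al m)) * prodl (map (fun j => / a j) (ail m))
  * prodl (map (eval_var s z Y1 Y2) (vs m)).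

Definition eval_poly s z a Y1 Y2 (P : poly) : R :=
  fold_right (fun m acc => eval_mono s z a Y1 Y2 m + acc) 0 P.

Definition thl (m k : nat) : list nat := seq (S m) (k - m - 1).

Definition uterm (mu : nat) (c : R) (ai : list nat) (w : list var) : poly :=
  map (fun l => Mono (- c) (seq l (mu - l + 1)) ai (w ++ [V2 l l])) (seq 1 mu).

Definition Zt (mu i m : nat) (c : R) (w : list var) : poly :=
  map (fun k => Mono c [] (thl m k) (w ++ [V2 i k])) (seq (S m) (mu - m))
  ++ uterm mu c (thl m (S mu)) (w ++ [VR i]).

Definition dvar (s z : nat) (omega : nat -> R) (v : var) : poly :=
  let mu := (s + z)%nat in
  match v with
  | VR i => flat_map (fun l => Zt mu i l (-1) [VR i; V2 i l]) (seq i (mu - i + 1))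
  | V1 i m => flat_map (fun l => Zt mu i l (-1) [V1 i m; V2 i l]) (seq i (mu - i + 1))
             ++ [Mono (omega m) [] [] [V2 i m]]
  | V2 i m => flat_map (fun l => Zt mu i l (-1) [V2 i m; V2 i l]) (seq i (mu - i + 1))
             ++ ((if (m <=? s)%nat then [Mono (- omega m) [] [] [V1 i m]] else [])
             ++ Zt mu i m 1 [])
  end.

Definition mulmm (m1 m2 : mono) : mono :=
  Mono (cf m1 * cf m2) (al m1 ++ al m2) (ail m1 ++ ail m2) (vs m1 ++ vs m2).

Fixpoint dlist (dv : var -> poly) (l : list var) : poly :=
  match l with
  | [] => []
  | v :: r => map (fun q => mulmm q (Mono 1 [] [] r)) (dv v)
              ++ map (mulmm (Mono 1 [] [] [v])) (dlist dv r)
  end.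

Definition dmono dv (m : mono) : poly :=
  map (mulmm (Mono (cf m) (al m) (ail m) [])) (dlist dv (vs m)).

Definition dpoly dv (P : poly) : poly := flat_map (dmono dv) P.

Lemma eval_poly_app s z a Y1 Y2 P Q :
  eval_poly s z a Y1 Y2 (P ++ Q) = eval_poly s z a Y1 Y2 P + eval_poly s z a Y1 Y2 Q.
Proof. induction P; simpl; [ring| rewrite IHP; ring]. Qed.

Lemma eval_mulmm s z a Y1 Y2 m1 m2 :
  eval_mono s z a Y1 Y2 (mulmm m1 m2) = eval_mono s z a Y1 Y2 m1 * eval_mono s z a Y1 Y2 m2.
Proof.
  unfold eval_mono, mulmm; simpl. rewrite !map_app, !prodl_app. ring.
Qed.

Lemma eval_map_mull s z a Y1 Y2 m P :
  eval_poly s z a Y1 Y2 (map (mulmm m) P) = eval_mono s z a Y1 Y2 m * eval_poly s z a Y1 Y2 P.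
Proof. induction P; simpl; [ring|rewrite eval_mulmm, IHP; ring]. Qed.

Lemma eval_map_mulr s z a Y1 Y2 m P :
  eval_poly s z a Y1 Y2 (map (fun q => mulmm q m) P) = eval_poly s z a Y1 Y2 P * eval_mono s z a Y1 Y2 m.
Proof. induction P; simpl; [ring|rewrite eval_mulmm, IHP; ring]. Qed.

Lemma eval_flat_map_seq s z a Y1 Y2 (f : nat -> poly) lo n :
  eval_poly s z a Y1 Y2 (flat_map f (seq lo n)) = sum_range (fun k => eval_poly s z a Y1 Y2 (f k)) lo n.
Proof. revert lo; induction n; intros lo; simpl; auto. rewrite eval_poly_app, IHn; auto. Qed.

Lemma eval_map_seq s z a Y1 Y2 (f : nat -> mono) lo n :
  eval_poly s z a Y1 Y2 (map f (seq lo n)) = sum_range (fun k => eval_mono s z a Y1 Y2 (f k)) lo n.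
Proof. revert lo; induction n; intros lo; simpl; auto. rewrite IHn; auto. Qed.

Lemma kappa_eq s z a Y1 Y2 :
  kappa s z a Y1 Y2 = - sum_range (fun l => prodl (map a (seq l (s + z - l + 1))) * rho s z Y1 Y2 l * Y2 l) 1 (s + z).
Proof.
  unfold kappa. rewrite (sum_range_split _ 1 s z). simpl (1 + s)%nat.
  rewrite Ropp_plus_distr. unfold Rminus.
  unfold Qim. f_equal; f_equal; apply sum_range_ext; intros k _; rewrite prod_range_seq; unfold rho, Rdiv; ring.
Qed.

Lemma eval_uterm s z a Y1 Y2 c ai w :
  eval_poly s z a Y1 Y2 (uterm (s + z) c ai w) =
  c * prodl (map (fun j => / a j) ai) * prodl (map (eval_var s z Y1 Y2) w) * kappa s z a Y1 Y2.
Proof.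
  unfold uterm. rewrite eval_map_seq, kappa_eq.
  match goal with |- _ = ?A * ?B * ?C * - sum_range ?g _ _ =>
    transitivity (sum_range (fun l => (-(A*B*C)) * g l) 1 (s+z)) end.
  - apply sum_range_ext; intros. unfold eval_mono; simpl.
    rewrite map_app, prodl_app; simpl. ring.
  - rewrite sum_range_scal; ring.
Qed.

Lemma eval_Zt s z a Y1 Y2 i m c w :
  eval_poly s z a Y1 Y2 (Zt (s + z) i m c w) =
  c * prodl (map (eval_var s z Y1 Y2) w) * rho s z Y1 Y2 i *
  (sum_range (fun k => theta a m k * Y2 k) (S m) (s + z - m) + theta a m (S (s + z)) * kappa s z a Y1 Y2).
Proof.
  unfold Zt. rewrite eval_poly_app, eval_uterm, eval_map_seq.
  rewrite Rmult_plus_distr_l. f_equal.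
  - rewrite <- sum_range_scal. apply sum_range_ext; intros.
    unfold eval_mono, theta, thl; simpl. rewrite prod_range_seq, map_app, prodl_app; simpl. ring.
  - unfold theta, thl. rewrite prod_range_seq. rewrite map_app, prodl_app; simpl. ring.
Qed.

Definition Yv (Y : nat -> R -> R) (t : R) : nat -> R := fun i => Y i t.

Lemma dlist_ok s z a Y1 Y2 dv l t :
  (forall v, In v l -> derivable_pt_lim (fun t => eval_var s z (Yv Y1 t) (Yv Y2 t) v) t
                         (eval_poly s z a (Yv Y1 t) (Yv Y2 t) (dv v))) ->
  derivable_pt_lim (fun t => prodl (map (eval_var s z (Yv Y1 t) (Yv Y2 t)) l)) t
                   (eval_poly s z a (Yv Y1 t) (Yv Y2 t) (dlist dv l)).
Proof.
  induction l as [|v r IH]; intros H; simpl.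
  - apply D_const.
  - rewrite eval_poly_app, eval_map_mull, eval_map_mulr.
    eapply D_ext; [intros; reflexivity| |apply D_mult; [apply H; left; auto| apply IH; intros; apply H; right; auto]].
    unfold eval_mono; simpl. ring.
Qed.

Lemma dpoly_ok s z a Y1 Y2 dv P t :
  (forall m v, In m P -> In v (vs m) -> derivable_pt_lim (fun t => eval_var s z (Yv Y1 t) (Yv Y2 t) v) t
                         (eval_poly s z a (Yv Y1 t) (Yv Y2 t) (dv v))) ->
  derivable_pt_lim (fun t => eval_poly s z a (Yv Y1 t) (Yv Y2 t) P) t
                   (eval_poly s z a (Yv Y1 t) (Yv Y2 t) (dpoly dv P)).
Proof.
  induction P as [|m P IH]; intros H; simpl.
  - apply D_const.
  - rewrite eval_poly_app. apply D_plus.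
    + unfold dmono. rewrite eval_map_mull.
      assert (K := dlist_ok s z a Y1 Y2 dv (vs m) t (fun v Hv => H m v (or_introl eq_refl) Hv)).
      eapply D_ext; [intros; reflexivity| |
        apply (D_mult (fun _ => cf m * prodl (map a (al m)) * prodl (map (fun j => / a j) (ail m))));
        [apply D_const| exact K]].
      unfold eval_mono; simpl. ring.
    + apply IH. intros; eapply H; eauto. right; auto.
Qed.

Definition rest s z a (Y1 Y2 : nat -> R -> R) (m : nat) (t : R) : R :=
  sum_range (fun k => theta a m k * Y2 k t) (S m) (s + z - m)
  + theta a m (S (s + z)) * kappa s z a (Yv Y1 t) (Yv Y2 t).

Lemma dY2 s z omega a Y1 Y2 m t :
  is_trajectory s z omega a Y1 Y2 -> (1 <= m <= s + z)%nat ->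
  derivable_pt_lim (Y2 m) t ((if (m <=? s)%nat then - omega m * Y1 m t else 0) + rest s z a Y1 Y2 m t).
Proof.
  intros [H1 H2] Hm. unfold rest.
  destruct (Nat.leb_spec m s) as [Hs|Hs].
  - destruct (H1 m t ltac:(lia)) as [_ D].
    eapply D_ext; [intros; reflexivity| |exact D].
    replace (s + z - m)%nat with (s - m + z)%nat by lia.
    rewrite sum_range_split. replace (S m + (s - m))%nat with (S s) by lia.
    unfold Yv; ring.
  - assert (D := H2 m t ltac:(lia)).
    eapply D_ext; [intros; reflexivity| |exact D]. unfold Yv; ring.
Qed.

Lemma dsq s z omega a Y1 Y2 m t :
  is_trajectory s z omega a Y1 Y2 -> (1 <= m <= s + z)%nat ->
  derivable_pt_lim (fun t => sqnorm s (Yv Y1 t) (Yv Y2 t) m) t (2 * Y2 m t * rest s z a Y1 Y2 m t).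
Proof.
  intros Htr Hm. pose proof (dY2 s z omega a Y1 Y2 m t Htr Hm) as D2.
  unfold sqnorm, Yv.
  destruct (Nat.leb_spec m s) as [Hs|Hs].
  - destruct Htr as [H1 _]. destruct (H1 m t ltac:(lia)) as [D1 _].
    eapply D_ext'; [apply D_plus; apply D_mult; [exact D1|exact D1|exact D2|exact D2]|intros; simpl; ring|].
    ring.
  - eapply D_ext'; [apply D_mult; [exact D2|exact D2]|intros; simpl; ring|]. ring.
Qed.

Lemma sqnorm_nonneg s Y1 Y2 m : 0 <= sqnorm s Y1 Y2 m.
Proof. unfold sqnorm; destruct (m <=? s)%nat; nra. Qed.

Lemma den_pos s z Y1 Y2 i : 0 < 1 + sum_range (sqnorm s Y1 Y2) i (s + z - i + 1).
Proof.
  assert (0 <= sum_range (sqnorm s Y1 Y2) i (s + z - i + 1)) by (apply sum_range_nonneg; intros; apply sqnorm_nonneg).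
  lra.
Qed.

Lemma drho s z omega a Y1 Y2 i t :
  is_trajectory s z omega a Y1 Y2 -> (1 <= i <= s + z)%nat ->
  derivable_pt_lim (fun t => rho s z (Yv Y1 t) (Yv Y2 t) i) t
    (- (rho s z (Yv Y1 t) (Yv Y2 t) i) ^ 3 *
       sum_range (fun m => Y2 m t * rest s z a Y1 Y2 m t) i (s + z - i + 1)).
Proof.
  intros Htr Hi.
  assert (DN : derivable_pt_lim (fun t => 1 + sum_range (fun m => sqnorm s (Yv Y1 t) (Yv Y2 t) m) i (s + z - i + 1)) t
     (0 + sum_range (fun m => 2 * Y2 m t * rest s z a Y1 Y2 m t) i (s + z - i + 1))).
  { apply D_plus. apply D_const. apply D_sum. intros k Hk. apply (dsq s z omega); auto.
    lia. }
  pose proof (den_pos s z (Yv Y1 t) (Yv Y2 t) i) as Hp.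
  pose proof (D_sqrt _ _ _ DN Hp) as DS.
  assert (Hsq : 0 < sqrt (1 + sum_range (sqnorm s (Yv Y1 t) (Yv Y2 t)) i (s + z - i + 1)))
    by (apply sqrt_lt_R0; auto).
  pose proof (D_inv _ _ _ DS ltac:(cbv beta; apply Rgt_not_eq; exact Hsq)) as DI.
  eapply D_ext; [intros; reflexivity| |exact DI].
  unfold rho. set (q := sqrt _) in *.
  assert (Hq : q * q = 1 + sum_range (sqnorm s (Yv Y1 t) (Yv Y2 t)) i (s + z - i + 1))
    by (apply sqrt_sqrt; lra).
  rewrite (sum_range_ext (fun m => 2 * Y2 m t * rest s z a Y1 Y2 m t) (fun m => 2 * (Y2 m t * rest s z a Y1 Y2 m t)))
    by (intros; ring).
  rewrite sum_range_scal. field. lra.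
Qed.

Definition validv (s z : nat) (v : var) : Prop :=
  match v with
  | VR i => (1 <= i <= s + z)%nat
  | V1 i m => (1 <= i <= m)%nat /\ (m <= s)%nat
  | V2 i m => (1 <= i <= m)%nat /\ (m <= s + z)%nat
  end.

Lemma sumZ s z a Y1 Y2 i c w t :
  eval_poly s z a (Yv Y1 t) (Yv Y2 t)
    (flat_map (fun l => Zt (s + z) i l c (w l)) (seq i (s + z - i + 1))) =
  sum_range (fun l => c * prodl (map (eval_var s z (Yv Y1 t) (Yv Y2 t)) (w l))
      * rho s z (Yv Y1 t) (Yv Y2 t) i * rest s z a Y1 Y2 l t) i (s + z - i + 1).
Proof.
  rewrite eval_flat_map_seq. apply sum_range_ext; intros. rewrite eval_Zt. reflexivity.
Qed.

Lemma sumZ2 s z a Y1 Y2 i w0 t :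
  eval_poly s z a (Yv Y1 t) (Yv Y2 t)
    (flat_map (fun l => Zt (s + z) i l (-1) [w0; V2 i l]) (seq i (s + z - i + 1))) =
  - eval_var s z (Yv Y1 t) (Yv Y2 t) w0 * rho s z (Yv Y1 t) (Yv Y2 t) i ^ 2 *
    sum_range (fun l => Y2 l t * rest s z a Y1 Y2 l t) i (s + z - i + 1).
Proof.
  rewrite sumZ. rewrite <- sum_range_scal. apply sum_range_ext; intros.
  simpl; unfold Yv; ring.
Qed.

Lemma dvar_ok s z omega a Y1 Y2 v t :
  is_trajectory s z omega a Y1 Y2 -> validv s z v ->
  derivable_pt_lim (fun t => eval_var s z (Yv Y1 t) (Yv Y2 t) v) t
                   (eval_poly s z a (Yv Y1 t) (Yv Y2 t) (dvar s z omega v)).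
Proof.
  intros Htr Hv.
  destruct v as [i|i m|i m]; simpl in Hv |- *.
  - eapply D_ext'; [apply (drho s z omega a Y1 Y2 i t); auto | intros; reflexivity | ].
    rewrite sumZ2. simpl. ring.
  - pose proof Htr as [H1 H2]. destruct (H1 m t ltac:(lia)) as [D1 _].
    eapply D_ext'; [apply D_mult; [apply (drho s z omega a Y1 Y2 i t); [auto|lia] | exact D1] | intros; reflexivity | ].
    rewrite eval_poly_app, sumZ2.
    simpl; unfold eval_mono; simpl. unfold Yv. ring.
  - eapply D_ext'; [apply D_mult; [apply (drho s z omega a Y1 Y2 i t); [auto|lia] | apply (dY2 s z omega a Y1 Y2 m t); [auto|lia]] | intros; reflexivity | ].
    rewrite !eval_poly_app, sumZ2. rewrite eval_Zt.
    destruct (m <=? s)%nat; simpl; unfold eval_mono, rest; simpl; unfold Yv; ring.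
Qed.

Definition vidx (v : var) : nat := match v with VR i => i | V1 i _ => i | V2 i _ => i end.

Definition WF (s z : nat) (m : mono) : Prop :=
  (forall j, In j (al m) -> (1 <= j <= s + z)%nat) /\
  (forall j, In j (ail m) -> (1 <= j <= s + z)%nat) /\
  (forall v, In v (vs m) -> validv s z v) /\
  exists i0, In i0 (al m) /\ (forall j, In j (ail m) -> (i0 < j)%nat) /\
             (forall v, In v (vs m) -> (i0 <= vidx v)%nat).

Definition DQ (s z i : nat) (q : mono) : Prop :=
  (forall j, In j (al q) -> (1 <= j <= s + z)%nat) /\
  (forall j, In j (ail q) -> (1 <= j <= s + z)%nat) /\
  (forall v, In v (vs q) -> validv s z v) /\
  (forall j, In j (ail q) -> (i < j)%nat) /\
  ((forall v, In v (vs q) -> (i <= vidx v)%nat) \/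
   exists l, In l (al q) /\ forall v, In v (vs q) -> (i <= vidx v)%nat \/ vidx v = l).

Lemma Zt_DQ s z i l c w q :
  (1 <= i <= l)%nat -> (l <= s + z)%nat ->
  (forall v, In v w -> validv s z v /\ (i <= vidx v)%nat) ->
  In q (Zt (s + z) i l c w) -> DQ s z i q.
Proof.
  intros Hil Hl Hw Hq. unfold Zt, uterm in Hq. apply in_app_iff in Hq as [Hq|Hq];
    apply in_map_iff in Hq as [k [<- Hk]]; apply in_seq in Hk; unfold DQ, thl; cbn [al ail vs].
  - refine (conj _ (conj _ (conj _ (conj _ _)))).
    + intros j [].
    + intros j Hj; apply in_seq in Hj; lia.
    + intros v Hv; apply in_app_iff in Hv as [Hv|[<-|[]]]; [apply Hw; auto| simpl; lia].
    + intros j Hj; apply in_seq in Hj; lia.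
    + left. intros v Hv; apply in_app_iff in Hv as [Hv|[<-|[]]]; [apply Hw; auto| simpl; lia].
  - refine (conj _ (conj _ (conj _ (conj _ _)))).
    + intros j Hj; apply in_seq in Hj; lia.
    + intros j Hj; apply in_seq in Hj; lia.
    + intros v Hv; rewrite <- app_assoc in Hv; apply in_app_iff in Hv as [Hv|[<-|[<-|[]]]];
        [apply Hw; auto| simpl; lia| simpl; lia].
    + intros j Hj; apply in_seq in Hj; lia.
    + right. exists k. split. apply in_seq; lia.
      intros v Hv; rewrite <- app_assoc in Hv; apply in_app_iff in Hv as [Hv|[<-|[<-|[]]]];
        [left; apply Hw; auto| left; simpl; lia| right; reflexivity].
Qed.

Lemma flatZ_DQ s z i c (w : nat -> list var) q :
  (1 <= i <= s + z)%nat ->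
  (forall l v, (i <= l <= s + z)%nat -> In v (w l) -> validv s z v /\ (i <= vidx v)%nat) ->
  In q (flat_map (fun l => Zt (s + z) i l c (w l)) (seq i (s + z - i + 1))) -> DQ s z i q.
Proof.
  intros Hi Hw Hq. apply in_flat_map in Hq as [l [Hl Hq]]. apply in_seq in Hl.
  eapply (Zt_DQ s z i l c (w l)); [| |intros v Hv; apply (Hw l v); [lia|exact Hv]|exact Hq]; lia.
Qed.

Lemma dvar_DQ s z omega v q :
  validv s z v -> In q (dvar s z omega v) -> DQ s z (vidx v) q.
Proof.
  intros Hv Hq. destruct v as [i|i m|i m]; simpl in Hv, Hq |- *.
  - eapply flatZ_DQ; [lia| |exact Hq].
    intros l u Hl [<-|[<-|[]]]; simpl; lia.
  - apply in_app_iff in Hq as [Hq|[<-|[]]].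
    + eapply flatZ_DQ; [lia| |exact Hq].
      intros l u Hl [<-|[<-|[]]]; simpl; lia.
    + unfold DQ; simpl. refine (conj _ (conj _ (conj _ (conj _ _)))).
      intros j []. intros j []. intros u [<-|[]]; simpl; lia. intros j [].
      left; intros u [<-|[]]; simpl; lia.
  - apply in_app_iff in Hq as [Hq|Hq]; [|apply in_app_iff in Hq as [Hq|Hq]].
    + eapply flatZ_DQ; [lia| |exact Hq].
      intros l u Hl [<-|[<-|[]]]; simpl; lia.
    + destruct (Nat.leb_spec m s); [|destruct Hq]. destruct Hq as [<-|[]].
      unfold DQ; simpl. refine (conj _ (conj _ (conj _ (conj _ _)))).
      intros j []. intros j []. intros u [<-|[]]; simpl; lia. intros j [].
      left; intros u [<-|[]]; simpl; lia.
    + apply (Zt_DQ s z i m 1 []); [lia|lia|intros u []|exact Hq].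
Qed.

Lemma In_dlist dv l r :
  In r (dlist dv l) -> exists pre v post q, l = pre ++ v :: post /\ In q (dv v) /\
    al r = al q /\ ail r = ail q /\ vs r = pre ++ vs q ++ post.
Proof.
  revert r; induction l as [|v l IH]; intros r Hr; simpl in Hr.
  - destruct Hr.
  - apply in_app_iff in Hr as [Hr|Hr]; apply in_map_iff in Hr as [q [<- Hq]].
    + exists [], v, l, q. simpl. rewrite !app_nil_r. auto.
    + destruct (IH q Hq) as [pre [v' [post [q' [E [Hq' [E1 [E2 E3]]]]]]]].
      exists (v :: pre), v', post, q'. simpl. rewrite E, E1, E2, E3. auto.
Qed.

Lemma WF_dmono s z omega m r :
  WF s z m -> In r (dmono (dvar s z omega) m) -> WF s z r.
Proof.
  intros [Ha [Hai [Hv [i0 [Hi0 [Hi0a Hi0v]]]]]] Hr.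
  unfold dmono in Hr. apply in_map_iff in Hr as [r0 [<- Hr0]].
  destruct (In_dlist _ _ _ Hr0) as [pre [v [post [q [E [Hq [E1 [E2 E3]]]]]]]].
  assert (Hvv : In v (vs m)) by (rewrite E; apply in_app_iff; right; left; auto).
  pose proof (dvar_DQ s z omega v q (Hv v Hvv) Hq) as [Qa [Qai [Qv [Qlt Qor]]]].
  pose proof (Hi0v v Hvv) as Hiv.
  unfold WF, mulmm; cbn [al ail vs]. rewrite E1, E2, E3. simpl.
  assert (Hpp : forall u, In u (pre ++ post) -> In u (vs m))
    by (intros u Hu; rewrite E; apply in_app_iff in Hu as [Hu|Hu]; apply in_app_iff; [left|right; right]; auto).
  refine (conj _ (conj _ (conj _ _))).
  - intros j Hj; apply in_app_iff in Hj as [Hj|Hj]; auto.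
  - intros j Hj; apply in_app_iff in Hj as [Hj|Hj]; auto.
  - intros u Hu. apply in_app_iff in Hu as [Hu|Hu]; [|apply in_app_iff in Hu as [Hu|Hu]]; auto;
      apply Hv, Hpp, in_app_iff; auto.
  - destruct Qor as [Qor|[l [Hl Ql]]].
    + exists i0. split; [apply in_app_iff; auto|split].
      * intros j Hj; apply in_app_iff in Hj as [Hj|Hj]; [auto| specialize (Qlt j Hj); lia].
      * intros u Hu. apply in_app_iff in Hu as [Hu|Hu]; [|apply in_app_iff in Hu as [Hu|Hu]].
        -- apply Hi0v, Hpp, in_app_iff; auto.
        -- specialize (Qor u Hu); lia.
        -- apply Hi0v, Hpp, in_app_iff; auto.
    + destruct (Nat.lt_ge_cases l i0) as [Hl0|Hl0].
      * exists l. split; [apply in_app_iff; auto|split].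
        -- intros j Hj; apply in_app_iff in Hj as [Hj|Hj]; [specialize (Hi0a j Hj); lia| specialize (Qlt j Hj); lia].
        -- intros u Hu. apply in_app_iff in Hu as [Hu|Hu]; [|apply in_app_iff in Hu as [Hu|Hu]].
           ++ assert (i0 <= vidx u)%nat by (apply Hi0v, Hpp, in_app_iff; auto). lia.
           ++ destruct (Ql u Hu); lia.
           ++ assert (i0 <= vidx u)%nat by (apply Hi0v, Hpp, in_app_iff; auto). lia.
      * exists i0. split; [apply in_app_iff; auto|split].
        -- intros j Hj; apply in_app_iff in Hj as [Hj|Hj]; [auto| specialize (Qlt j Hj); lia].
        -- intros u Hu. apply in_app_iff in Hu as [Hu|Hu]; [|apply in_app_iff in Hu as [Hu|Hu]].
           ++ apply Hi0v, Hpp, in_app_iff; auto.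
           ++ destruct (Ql u Hu); lia.
           ++ apply Hi0v, Hpp, in_app_iff; auto.
Qed.

Definition Pk (s z : nat) (omega : nat -> R) (k : nat) : poly :=
  Nat.iter k (dpoly (dvar s z omega)) (uterm (s + z) 1 [] []).

Lemma WF_Pk s z omega k m : In m (Pk s z omega k) -> WF s z m.
Proof.
  revert m; induction k as [|k IH]; intros m Hm; simpl in Hm.
  - unfold uterm in Hm. apply in_map_iff in Hm as [l [<- Hl]]. apply in_seq in Hl.
    unfold WF; cbn [al ail vs]. refine (conj _ (conj _ (conj _ _))).
    + intros j Hj; apply in_seq in Hj; lia.
    + intros j [].
    + intros u [<-|[]]; simpl; lia.
    + exists l. split; [apply in_seq; lia|split]. intros j []. intros u [<-|[]]; simpl; lia.
  - unfold dpoly in Hm. apply in_flat_map in Hm as [m0 [Hm0 Hm]].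
    eapply WF_dmono; eauto.
Qed.

Lemma abs_le_sqrt y N : 0 <= N -> y ^ 2 <= 1 + N -> Rabs y <= sqrt (1 + N).
Proof.
  intros HN Hy. assert (Hq := sqrt_sqrt (1 + N) ltac:(lra)).
  assert (Hq0 := sqrt_pos (1 + N)). set (q := sqrt (1 + N)) in *.
  unfold Rabs; destruct (Rcase_abs y); nra.
Qed.

Lemma var_bound s z Y1 Y2 v : validv s z v -> Rabs (eval_var s z Y1 Y2 v) <= 1.
Proof.
  intros Hv.
  assert (Hgen : forall i y, (1 <= i)%nat -> y ^ 2 <= 1 + sum_range (sqnorm s Y1 Y2) i (s + z - i + 1) ->
                  Rabs (rho s z Y1 Y2 i * y) <= 1).
  { intros i y Hi Hy. unfold rho.
    assert (H0 : 0 <= sum_range (sqnorm s Y1 Y2) i (s + z - i + 1)) by (apply sum_range_nonneg; intros; apply sqnorm_nonneg).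
    pose proof (abs_le_sqrt y _ H0 Hy) as Ha.
    assert (Hs : 0 < sqrt (1 + sum_range (sqnorm s Y1 Y2) i (s + z - i + 1))) by (apply sqrt_lt_R0; lra).
    rewrite Rabs_mult, Rabs_inv, (Rabs_pos_eq (sqrt _)) by lra.
    set (q := sqrt _) in *.
    apply (Rmult_le_reg_l q); auto. rewrite <- Rmult_assoc, Rinv_r by lra. lra. }
  assert (Hterm : forall i m, (i <= m <= s + z)%nat -> sqnorm s Y1 Y2 m <= sum_range (sqnorm s Y1 Y2) i (s + z - i + 1)).
  { intros i m Hm. apply sum_range_term. intros; apply sqnorm_nonneg. lia. }
  destruct v as [i|i m|i m]; simpl in Hv |- *.
  - replace (rho s z Y1 Y2 i) with (rho s z Y1 Y2 i * 1) by ring.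
    apply Hgen; [lia|].
    assert (0 <= sum_range (sqnorm s Y1 Y2) i (s + z - i + 1)) by (apply sum_range_nonneg; intros; apply sqnorm_nonneg).
    lra.
  - apply Hgen; [lia|]. assert (K := Hterm i m ltac:(lia)).
    assert (Y1 m ^ 2 <= sqnorm s Y1 Y2 m).
    { unfold sqnorm. destruct (Nat.leb_spec m s); [|lia]. pose proof (pow2_ge_0 (Y2 m)); lra. }
    lra.
  - apply Hgen; [lia|]. assert (K := Hterm i m ltac:(lia)).
    assert (Y2 m ^ 2 <= sqnorm s Y1 Y2 m).
    { unfold sqnorm. destruct (m <=? s)%nat; pose proof (pow2_ge_0 (Y1 m)); lra. }
    lra.
Qed.

Fixpoint minl (l : list nat) : nat :=
  match l with
  | [] => O
  | [x] => x
  | x :: r => Nat.min x (minl r)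
  end.

Lemma minl_spec l : l <> [] -> In (minl l) l /\ forall x, In x l -> (minl l <= x)%nat.
Proof.
  induction l as [|x r IH]; intros H; [congruence|].
  destruct r as [|y r'].
  - simpl. split; auto. intros x' [<-|[]]; lia.
  - destruct IH as [IH1 IH2]; [congruence|].
    change (minl (x :: y :: r')) with (Nat.min x (minl (y :: r'))).
    split.
    + destruct (Nat.le_ge_cases x (minl (y :: r'))).
      * rewrite Nat.min_l by lia; left; auto.
      * rewrite Nat.min_r by lia; right; auto.
    + intros x' [<-|Hx]; [lia|]. specialize (IH2 x' Hx); lia.
Qed.

Definition lev (m : mono) : nat := minl (al m).
Definition mb (a : nat -> R) (m : mono) : R := Rabs (cf m) * prodl (map (fun j => / a j) (ail m)).

Lemma WF_lev s z m : WF s z m ->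
  (1 <= lev m <= s + z)%nat /\ In (lev m) (al m) /\ (forall j, In j (ail m) -> (lev m < j <= s + z)%nat).
Proof.
  intros [Ha [Hai [Hv [i0 [Hi0 [Hi0a Hi0v]]]]]].
  assert (Hne : al m <> []) by (intros E; rewrite E in Hi0; destruct Hi0).
  destruct (minl_spec _ Hne) as [H1 H2]. unfold lev.
  split; [apply Ha; auto|split; auto].
  intros j Hj. specialize (H2 i0 Hi0). specialize (Hi0a j Hj). specialize (Hai j Hj). lia.
Qed.

Lemma prodl_pos (f : nat -> R) l : (forall j, In j l -> 0 < f j) -> 0 < prodl (map f l).
Proof.
  induction l; intros H; simpl. lra.
  apply Rmult_lt_0_compat; [apply H; left; auto| apply IHl; intros; apply H; right; auto].
Qed.

Lemma prodl_le_elem (f : nat -> R) l y : (forall j, In j l -> 0 < f j <= 1) -> In y l ->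
  prodl (map f l) <= f y.
Proof.
  induction l as [|x l IH]; intros H Hy; simpl. destruct Hy.
  assert (Hp : 0 < prodl (map f l)) by (apply prodl_pos; intros; apply H; right; auto).
  assert (Hp1 : prodl (map f l) <= 1).
  { clear IH Hy. induction l as [|w l IHl]; simpl. lra.
    assert (0 < f w <= 1) by (apply H; right; left; auto).
    assert (0 < prodl (map f l)) by (apply prodl_pos; intros; apply H; right; right; auto).
    assert (prodl (map f l) <= 1) by (apply IHl; [intros j [Hj|Hj]; apply H; [left|right;right]; auto|auto]).
    nra. }
  assert (Hx : 0 < f x <= 1) by (apply H; left; auto).
  destruct Hy as [<-|Hy].
  - nra.
  - assert (prodl (map f l) <= f y) by (apply IH; auto; intros; apply H; right; auto). nra.
Qed.

Lemma prodl_abs_le1 (f : var -> R) l : (forall v, In v l -> Rabs (f v) <= 1) -> Rabs (prodl (map f l)) <= 1.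
Proof.
  induction l; intros H; simpl. rewrite Rabs_R1; lra.
  rewrite Rabs_mult. assert (Rabs (f a) <= 1) by (apply H; left; auto).
  assert (Rabs (prodl (map f l)) <= 1) by (apply IHl; intros; apply H; right; auto).
  pose proof (Rabs_pos (f a)); pose proof (Rabs_pos (prodl (map f l))). nra.
Qed.

Lemma mono_bound s z a Y1 Y2 m :
  (forall j, (1 <= j <= s + z)%nat -> 0 < a j <= 1) -> WF s z m ->
  Rabs (eval_mono s z a Y1 Y2 m) <= a (lev m) * mb a m.
Proof.
  intros Ha Hw. destruct (WF_lev s z m Hw) as [Hl1 [Hl2 Hl3]].
  destruct Hw as [Hal [Hail [Hv _]]].
  unfold eval_mono, mb. rewrite !Rabs_mult.
  assert (HA : prodl (map a (al m)) <= a (lev m)) by (apply prodl_le_elem; auto; intros; apply Ha; auto).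
  assert (HA0 : 0 < prodl (map a (al m))) by (apply prodl_pos; intros; apply Ha; auto).
  assert (HI : 0 < prodl (map (fun j => / a j) (ail m)))
    by (apply prodl_pos; intros; apply Rinv_0_lt_compat, Ha; auto).
  assert (HV : Rabs (prodl (map (eval_var s z Y1 Y2) (vs m))) <= 1)
    by (apply prodl_abs_le1; intros; apply var_bound; auto).
  rewrite (Rabs_pos_eq (prodl (map a _))), (Rabs_pos_eq (prodl (map (fun j => / a j) _))) by lra.
  pose proof (Rabs_pos (cf m)). pose proof (Rabs_pos (prodl (map (eval_var s z Y1 Y2) (vs m)))).
  assert (K1 : Rabs (cf m) * prodl (map a (al m)) <= Rabs (cf m) * a (lev m)) by (apply Rmult_le_compat_l; auto).
  assert (K2 : Rabs (cf m) * prodl (map a (al m)) * prodl (map (fun j => / a j) (ail m))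
               <= Rabs (cf m) * a (lev m) * prodl (map (fun j => / a j) (ail m))) by (apply Rmult_le_compat_r; lra).
  assert (K3 : 0 <= Rabs (cf m) * prodl (map a (al m)) * prodl (map (fun j => / a j) (ail m))).
  { apply Rmult_le_pos; [apply Rmult_le_pos|]; lra. }
  nra.
Qed.

Definition LB (i : nat) (a : nat -> R) (P : poly) : R :=
  fold_right (fun m acc => (if (lev m =? i)%nat then mb a m else 0) + acc) 0 P.

Lemma sum_pick (g : nat -> R) k lo n : (lo <= k < lo + n)%nat ->
  sum_range (fun i => if (k =? i)%nat then g i else 0) lo n = g k.
Proof.
  revert lo; induction n; intros lo H; simpl. lia.
  destruct (Nat.eqb_spec k lo) as [->|Hne].
  - rewrite (sum_range_ext _ (fun _ => 0)).
    + clear. assert (forall l n0, sum_range (fun _ => 0) l n0 = 0) as ->. { intros l n0; revert l; induction n0 as [|n0 IHn0]; intros; simpl; auto. rewrite IHn0; ring. } ring.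
    + intros j Hj. destruct (Nat.eqb_spec lo j); [lia|auto].
  - rewrite IHn by lia. ring.
Qed.

Lemma poly_bound s z a Y1 Y2 P :
  (forall j, (1 <= j <= s + z)%nat -> 0 < a j <= 1) -> (forall m, In m P -> WF s z m) ->
  Rabs (eval_poly s z a Y1 Y2 P) <= sum_range (fun i => a i * LB i a P) 1 (s + z).
Proof.
  intros Ha. induction P as [|m P IH]; intros HP; simpl.
  - rewrite Rabs_R0. assert (forall l n, sum_range (fun i => a i * 0) l n = 0) as ->.
    { intros l n; revert l; induction n; intros; simpl; auto. rewrite IHn; ring. } lra.
  - rewrite (sum_range_ext _ (fun i => (if (lev m =? i)%nat then a i * mb a m else 0) + a i * LB i a P)).
    2:{ intros k _. unfold LB; simpl. destruct (lev m =? k)%nat; ring. }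
    rewrite sum_range_plus.
    assert (Hw : WF s z m) by (apply HP; left; auto).
    rewrite (sum_pick (fun i => a i * mb a m)) by (destruct (WF_lev s z m Hw); lia).
    eapply Rle_trans; [apply Rabs_triang|].
    apply Rplus_le_compat; [apply mono_bound; auto| apply IH; intros; apply HP; right; auto].
Qed.

Lemma mb_nonneg a m : (forall j, In j (ail m) -> 0 < a j) -> 0 <= mb a m.
Proof.
  intros H. unfold mb. apply Rmult_le_pos; [apply Rabs_pos|].
  apply Rlt_le, prodl_pos; intros; apply Rinv_0_lt_compat; auto.
Qed.

Lemma LB_nonneg s z i a P : (forall m, In m P -> WF s z m) -> pos_on (s + z) i a -> 0 <= LB i a P.
Proof.
  intros HP Ha. induction P as [|m P IH]; simpl. lra.
  assert (0 <= LB i a P) by (apply IH; intros; apply HP; right; auto).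
  destruct (Nat.eqb_spec (lev m) i) as [E|]; [|lra].
  assert (Hw : WF s z m) by (apply HP; left; auto). destruct (WF_lev s z m Hw) as [_ [_ H3]].
  assert (0 <= mb a m) by (apply mb_nonneg; intros j Hj; apply Ha; specialize (H3 j Hj); lia). lra.
Qed.

Lemma LB_dep s z i a b P : (forall m, In m P -> WF s z m) ->
  (forall j, (i < j <= s + z)%nat -> a j = b j) -> LB i a P = LB i b P.
Proof.
  intros HP Hab. induction P as [|m P IH]; simpl; auto.
  rewrite IH by (intros; apply HP; right; auto).
  destruct (Nat.eqb_spec (lev m) i) as [E|]; auto.
  assert (Hw : WF s z m) by (apply HP; left; auto). destruct (WF_lev s z m Hw) as [_ [_ H3]].
  f_equal. unfold mb. f_equal. f_equal. apply map_ext_in. intros j Hj.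
  rewrite Hab; auto. specialize (H3 j Hj); lia.
Qed.

Definition ctsF (mu i : nat) (F : (nat -> R) -> R) : Prop :=
  forall a, pos_on mu i a ->
     forall eps, 0 < eps -> exists delta, 0 < delta /\
       forall b, pos_on mu i b ->
         (forall j, (i < j <= mu)%nat -> Rabs (b j - a j) < delta) ->
         Rabs (F b - F a) < eps.

Lemma cts_const mu i c : ctsF mu i (fun _ => c).
Proof. intros a _ eps He. exists 1; split; [lra|]. intros; unfold Rminus; rewrite Rplus_opp_r, Rabs_R0; auto. Qed.

Lemma cts_plus mu i F G : ctsF mu i F -> ctsF mu i G -> ctsF mu i (fun a => F a + G a).
Proof.
  intros HF HG a Ha eps He.
  destruct (HF a Ha (eps/2) ltac:(lra)) as [d1 [Hd1 K1]].
  destruct (HG a Ha (eps/2) ltac:(lra)) as [d2 [Hd2 K2]].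
  exists (Rmin d1 d2); split; [apply Rmin_pos; auto|].
  intros b Hb Hj.
  assert (A1 := K1 b Hb (fun j H => Rlt_le_trans _ _ _ (Hj j H) (Rmin_l _ _))).
  assert (A2 := K2 b Hb (fun j H => Rlt_le_trans _ _ _ (Hj j H) (Rmin_r _ _))).
  replace (F b + G b - (F a + G a)) with ((F b - F a) + (G b - G a)) by ring.
  eapply Rle_lt_trans; [apply Rabs_triang|]. lra.
Qed.

Lemma cts_mult mu i F G : ctsF mu i F -> ctsF mu i G -> ctsF mu i (fun a => F a * G a).
Proof.
  intros HF HG a Ha eps He.
  set (MF := Rabs (F a) + 1). set (MG := Rabs (G a) + 1).
  assert (HMF : 0 < MF) by (unfold MF; pose proof (Rabs_pos (F a)); lra).
  assert (HMG : 0 < MG) by (unfold MG; pose proof (Rabs_pos (G a)); lra).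
  destruct (HF a Ha (Rmin 1 (eps / (2 * MG))) ltac:(apply Rmin_pos; [lra| apply Rdiv_lt_0_compat; lra])) as [d1 [Hd1 K1]].
  destruct (HG a Ha (eps / (2 * MF)) ltac:(apply Rdiv_lt_0_compat; lra)) as [d2 [Hd2 K2]].
  exists (Rmin d1 d2); split; [apply Rmin_pos; auto|].
  intros b Hb Hj.
  assert (A1 := K1 b Hb (fun j H => Rlt_le_trans _ _ _ (Hj j H) (Rmin_l _ _))).
  assert (A2 := K2 b Hb (fun j H => Rlt_le_trans _ _ _ (Hj j H) (Rmin_r _ _))).
  assert (B1 : Rabs (F b - F a) < 1) by (eapply Rlt_le_trans; [exact A1| apply Rmin_l]).
  assert (B2 : Rabs (F b - F a) < eps / (2 * MG)) by (eapply Rlt_le_trans; [exact A1| apply Rmin_r]).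
  assert (C1 : Rabs (F b) < MF).
  { unfold MF. replace (F b) with (F a + (F b - F a)) by ring.
    eapply Rle_lt_trans; [apply Rabs_triang|]. lra. }
  replace (F b * G b - F a * G a) with (F b * (G b - G a) + G a * (F b - F a)) by ring.
  eapply Rle_lt_trans; [apply Rabs_triang|]. rewrite !Rabs_mult.
  assert (E1 : Rabs (F b) * Rabs (G b - G a) <= MF * (eps / (2 * MF))).
  { apply Rmult_le_compat; try apply Rabs_pos; lra. }
  assert (E3 : Rabs (G a) * Rabs (F b - F a) < MG * (eps / (2 * MG))).
  { destruct (Rle_lt_or_eq_dec 0 (Rabs (G a)) (Rabs_pos _)) as [Hp|Hz].
    - apply Rle_lt_trans with (Rabs (G a) * (eps / (2 * MG))).
      + apply Rmult_le_compat_l; [apply Rabs_pos|lra].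
      + apply Rmult_lt_compat_r; [apply Rdiv_lt_0_compat; lra| unfold MG; lra].
    - rewrite <- Hz. rewrite Rmult_0_l. apply Rmult_lt_0_compat; [lra| apply Rdiv_lt_0_compat; lra]. }
  replace (MF * (eps / (2 * MF))) with (eps / 2) in E1 by (field; lra).
  replace (MG * (eps / (2 * MG))) with (eps / 2) in E3 by (field; lra).
  lra.
Qed.

Lemma cts_inv mu i j : (i < j <= mu)%nat -> ctsF mu i (fun a => / a j).
Proof.
  intros Hj a Ha eps He. assert (Haj := Ha j Hj). set (x := a j) in *.
  exists (Rmin (x / 2) (eps * x * x / 2)). split.
  { apply Rmin_pos; [lra|]. apply Rdiv_lt_0_compat; [|lra]. repeat apply Rmult_lt_0_compat; lra. }
  intros b Hb Hd. assert (Hbj := Hb j Hj). specialize (Hd j Hj). set (y := b j) in *.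
  assert (D1 : Rabs (y - x) < x / 2) by (eapply Rlt_le_trans; [exact Hd|apply Rmin_l]).
  assert (D2 : Rabs (y - x) < eps * x * x / 2) by (eapply Rlt_le_trans; [exact Hd|apply Rmin_r]).
  assert (Hy : x / 2 < y) by (apply Rabs_def2 in D1; lra).
  replace (/ y - / x) with ((x - y) * / (x * y)) by (field; lra).
  rewrite Rabs_mult, Rabs_inv, (Rabs_pos_eq (x * y)) by nra.
  rewrite <- Rabs_Ropp. replace (- (x - y)) with (y - x) by ring.
  apply (Rmult_lt_reg_r (x * y)); [nra|]. rewrite Rmult_assoc, Rinv_l by nra. rewrite Rmult_1_r.
  assert (eps * x * x / 2 <= eps * (x * y)). { assert (0 < eps * x) by (apply Rmult_lt_0_compat; lra). replace (eps * x * x / 2) with ((eps * x) * (x / 2)) by field. replace (eps * (x * y)) with ((eps * x) * y) by ring. apply Rmult_le_compat_l; lra. } lra.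
Qed.

Lemma cts_prodl_inv mu i l : (forall j, In j l -> (i < j <= mu)%nat) ->
  ctsF mu i (fun a => prodl (map (fun j => / a j) l)).
Proof.
  induction l as [|j l IH]; intros H; simpl.
  - apply cts_const.
  - apply (cts_mult mu i (fun a => / a j) (fun a => prodl (map (fun j => / a j) l))).
    + apply cts_inv, H; left; auto.
    + apply IH; intros; apply H; right; auto.
Qed.

Lemma cts_LB s z i P : (forall m, In m P -> WF s z m) -> ctsF (s + z) i (fun a => LB i a P).
Proof.
  intros HP. induction P as [|m P IH]; simpl.
  - apply cts_const.
  - apply (cts_plus _ _ (fun a => if (lev m =? i)%nat then mb a m else 0) (fun a => LB i a P)).
    + destruct (Nat.eqb_spec (lev m) i) as [E|]; [|apply cts_const].
      assert (Hw : WF s z m) by (apply HP; left; auto). destruct (WF_lev s z m Hw) as [_ [_ H3]].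
      unfold mb. apply (cts_mult _ _ (fun _ => Rabs (cf m))); [apply cts_const|].
      apply cts_prodl_inv. intros j Hj; specialize (H3 j Hj); lia.
    + apply IH; intros; apply HP; right; auto.
Qed.

Lemma cts_sum_range mu i (F : nat -> (nat -> R) -> R) lo n :
  (forall k, ctsF mu i (F k)) -> ctsF mu i (fun a => sum_range (fun k => F k a) lo n).
Proof.
  intros H. revert lo; induction n; intros lo; simpl.
  - apply cts_const.
  - apply (cts_plus _ _ (F lo) (fun a => sum_range (fun k => F k a) (S lo) n)); auto.
Qed.

Theorem proposition2 (s z : nat) (omega : nat -> R) (p : nat) :
  (1 <= s + z)%nat ->
  (forall i, (1 <= i <= s)%nat -> 0 < omega i) ->
  exists (cmu : R) (c : nat -> (nat -> R) -> R),
    0 < cmu /\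
    (forall i, (1 <= i <= s + z - 1)%nat -> admissible_coef (s + z) i (c i)) /\
    forall (a : nat -> R) (Y1 Y2 : nat -> R -> R),
      (forall i, (1 <= i <= s + z)%nat -> 0 < a i <= 1) ->
      is_trajectory s z omega a Y1 Y2 ->
      exists D : nat -> R -> R,
        (forall t, D O t = kappa s z a (fun i => Y1 i t) (fun i => Y2 i t)) /\
        (forall j t, (j < p)%nat -> derivable_pt_lim (D j) t (D (S j) t)) /\
        (forall k t, (k <= p)%nat -> 0 <= t ->
           Rabs (D k t) <= a (s + z)%nat * cmu
                           + sum_range (fun i => a i * c i a) 1 (s + z - 1)).
Proof.
  intros Hmu Hom.
  set (c := fun i (a : nat -> R) => 1 + sum_range (fun k => LB i a (Pk s z omega k)) 0 (S p)).
  assert (Cnn : forall i a, pos_on (s + z) i a -> 0 <= sum_range (fun k => LB i a (Pk s z omega k)) 0 (S p)).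
  { intros i a Ha. apply sum_range_nonneg. intros k _. apply (LB_nonneg s z); auto.
    intros; eapply WF_Pk; eauto. }
  assert (Cdep : forall i a b, (forall j, (i < j <= s + z)%nat -> a j = b j) -> c i a = c i b).
  { intros i a b H. unfold c. f_equal. apply sum_range_ext. intros k _.
    apply (LB_dep s z); auto. intros; eapply WF_Pk; eauto. }
  exists (c (s + z)%nat (fun _ => 1)), c.
  split; [|split].
  - unfold c. assert (0 <= sum_range (fun k => LB (s + z) (fun _ => 1) (Pk s z omega k)) 0 (S p)).
    { apply Cnn. intros j Hj; lra. } lra.
  - intros i Hi. unfold admissible_coef. split; [|split].
    + apply Cdep.
    + intros a Ha. unfold c. pose proof (Cnn i a Ha). lra.
    + intros a Ha. apply (cts_plus _ _ (fun _ => 1) (fun a => sum_range (fun k => LB i a (Pk s z omega k)) 0 (S p))); auto.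
      apply cts_const. apply (cts_sum_range _ _ (fun k a => LB i a (Pk s z omega k))).
      intros k. apply cts_LB. intros; eapply WF_Pk; eauto.
  - intros a Y1 Y2 Ha Htr.
    exists (fun k t => eval_poly s z a (Yv Y1 t) (Yv Y2 t) (Pk s z omega k)).
    split; [|split].
    + intros t. simpl. unfold Pk; simpl. rewrite eval_uterm. simpl. unfold Yv. ring.
    + intros j t _. change (Pk s z omega (S j)) with (dpoly (dvar s z omega) (Pk s z omega j)).
      apply dpoly_ok. intros m v Hm Hv. apply (dvar_ok s z omega a); auto.
      destruct (WF_Pk s z omega j m Hm) as [_ [_ [H _]]]. auto.
    + intros k t Hk _.
      eapply Rle_trans; [apply poly_bound; auto; intros; eapply WF_Pk; eauto|].
      assert (Hpos : forall i, (1 <= i)%nat -> pos_on (s + z) i a).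
      { intros i Hi j Hj. apply Ha; lia. }
      eapply Rle_trans with (sum_range (fun i => a i * c i a) 1 (s + z)).
      * apply sum_range_le. intros i Hi. apply Rmult_le_compat_l; [pose proof (Ha i ltac:(lia)); lra|].
        unfold c. pose proof (Cnn i a (Hpos i ltac:(lia))).
        assert (LB i a (Pk s z omega k) <= sum_range (fun k => LB i a (Pk s z omega k)) 0 (S p)).
        { apply (sum_range_term (fun k => LB i a (Pk s z omega k))); [|lia].
          intros k' _. apply (LB_nonneg s z); [intros; eapply WF_Pk; eauto| apply Hpos; lia]. }
        lra.
      * replace (s + z)%nat with ((s + z - 1) + 1)%nat at 1 by lia.
        rewrite sum_range_split. replace (1 + (s + z - 1))%nat with (s + z)%nat by lia. simpl.
        rewrite (Cdep (s + z)%nat a (fun _ => 1)) by lia. lra.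
Qed.
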